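(* For every integer $m\ge 1$, the function $f:2^V\to\mathbb{R}$, $f(A)=\sum_{v\in V}m_A(v)$, is non-decreasing and submodular: for all $A\subseteq B\subseteq V$, $f(A)\le f(B)$, and for all $x\in V\setminus B$, $f(B\cup\{x\})-f(B)\le f(A\cup\{x\})-f(A)$.
   Context: $G=(V,E)$ is a finite simple undirected graph, $N(v)$ the neighborhood of $v$, $N_C(v)=N(v)\cap C$. $m_A(v)=m$ if [$v\notin A$ and $|N_A(v)|\ge m$] or [$v\in A$ and $|N_A(v)|>0$]; $m_A(v)=m-1$ if $v\in A$ and $|N_A(v)|=0$; and $m_A(v)=|N_A(v)|$ otherwise. *)

(* Defs.v *)
From mathcomp Require Import all_boot all_order all_algebra.
Set Implicit Arguments. Unset Strict Implicit. Unset Printing Implicit Defensive.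
Import Order.TTheory GRing.Theory Num.Theory.

Definition simple_graph (T : finType) (e : rel T) : Prop :=
  symmetric e /\ irreflexive e.

Definition nbhd (T : finType) (e : rel T) (v : T) : {set T} := [set u | e v u].

Definition nbhd_in (T : finType) (e : rel T) (C : {set T}) (v : T) : {set T} :=
  nbhd e v :&: C.

Definition mA (T : finType) (e : rel T) (m : nat) (A : {set T}) (v : T) : nat :=
  let k := #|nbhd_in e A v| in
  if v \notin A then (if m <= k then m else k)
  else (if 0 < k then m else m.-1).

Definition fm (T : finType) (e : rel T) (m : nat) (A : {set T}) : int :=
  (\sum_(v : T) mA e m A v)%:Z.

(* Main.v *)
Require Import Defs.
From mathcomp Require Import all_boot all_order all_algebra.
From mathcomp Require Import zify.
Import Order.TTheory GRing.Theory Num.Theory.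
Local Open Scope ring_scope.

Definition gg (m : nat) (inS : bool) (k : nat) : nat :=
  if ~~ inS then (if (m <= k)%N then m else k) else (if (0 < k)%N then m else m.-1).

Lemma gg_mono m (sA sB : bool) a b : (sA -> sB) -> (a <= b)%N ->
  (gg m sA a <= gg m sB b)%N.
Proof.
rewrite /gg; case: sA; case: sB => //= H Hab; try (by move: (H isT));
repeat case: ifP; lia.
Qed.

Lemma gg_sub m (sA sB vx ex : bool) a b : (1 <= m)%N -> (sA -> sB) -> (a <= b)%N ->
  (vx -> ~~ ex && ~~ sB) ->
  (gg m (vx || sB) (b + ex) + gg m sA a <= gg m (vx || sA) (a + ex) + gg m sB b)%N.
Proof.
rewrite /gg => Hm; case: sA; case: sB; case: vx; case: ex => //= H Hab Hv;
try (by move: (H isT)); try (by move: (Hv isT));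
repeat case: ifP; lia.
Qed.

Lemma card_step (T : finType) (e : rel T) (S : {set T}) x v :
  x \notin S -> #|nbhd_in e (x |: S) v| = (#|nbhd_in e S v| + e v x)%N.
Proof.
move=> xS; rewrite /nbhd_in setIUr.
case exv: (e v x).
- have -> : nbhd e v :&: [set x] = [set x].
    by apply/setP=> y; rewrite !inE; case: eqP => [->|]; rewrite ?exv ?andbT ?andbF.
  rewrite cardsU1 !inE (negbTE xS) andbF /=; lia.
- have -> : nbhd e v :&: [set x] = set0.
    by apply/setP=> y; rewrite !inE; case: eqP => [->|]; rewrite ?exv ?andbT ?andbF.
  by rewrite set0U addn0.
Qed.

Lemma mA_gg (T : finType) (e : rel T) m S v : mA e m S v = gg m (v \in S) #|nbhd_in e S v|.
Proof. by []. Qed.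

Theorem mainTheorem8 (T : finType) (e : rel T) (m : nat) :
  simple_graph e -> (1 <= m)%N ->
  forall A B : {set T}, A \subset B ->
    fm e m A <= fm e m B /\
    (forall x : T, x \notin B ->
       fm e m (x |: B) - fm e m B <= fm e m (x |: A) - fm e m A).
Proof.
move=> [_ irr] Hm A B AB.
have kAB v : (#|nbhd_in e A v| <= #|nbhd_in e B v|)%N.
  by apply: subset_leq_card; rewrite /nbhd_in setIS.
split.
  rewrite /fm lez_nat; apply: leq_sum => v _; rewrite !mA_gg.
  apply: gg_mono => //; exact: (subsetP AB).
move=> x xB.
have xA : x \notin A by apply: contra xB; apply: (subsetP AB).
rewrite /fm lerBlDr addrAC lerBrDr -!PoszD lez_nat -!big_split /=.
apply: leq_sum => v _; rewrite !mA_gg !card_step // !in_setU1.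
apply: gg_sub => //; first exact: (subsetP AB).
move/eqP=> ->; rewrite irr xB //.
Qed.
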